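(* Let $n\ge 10$ be even, $K_n=(V,E)$ the complete graph, and $M_1,M_2$ two different perfect matchings in $K_n$. Then $\bm{c}=\chi(M_1)-\chi(M_2)$ is a circuit of the Perfect Matching polytope $P_{\mathrm{perfmatch}}(n)=\operatorname{conv}\{\chi(M): M\text{ a perfect matching in }K_n\}$, with circuits taken with respect to the linear description $$\bm{x}(\delta(S))\ge 1\ \text{for all } S\subset V,\ |S|\text{ odd},\ |S|\ge 3;\quad \bm{x}(\delta(v))=1\ \text{for all } v\in V;\quad \bm{x}\ge\bm{0}.$$
   Context: $\chi(M)\in\{0,1\}^E$ is the characteristic vector of $M$; $\delta(S)$ is the set of edges with exactly one endpoint in $S$, $\delta(v)=\delta(\{v\})$, $\bm{x}(F)=\sum_{e\in F}x_e$. Circuits: for a polytope $P=\{\bm{x}: A\bm{x}=\bm{b},\ B\bm{x}\le \bm{d}\}$ given by a fixed linear system, a nonzero vector $\bm{g}$ is a circuit of $P$ if $A\bm{g}=\bm{0}$ and $\operatorname{supp}(B\bm{g})$ is inclusion-minimal among the sets $\operatorname{supp}(B\bm{y})$ with $A\bm{y}=\bm{0}$, $\bm{y}\neq\bm{0}$. *)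

(* Defs.v *)
From mathcomp Require Import all_boot all_order all_algebra.
From mathcomp Require Import reals.
Set Implicit Arguments. Unset Strict Implicit. Unset Printing Implicit Defensive.
Import Order.TTheory GRing.Theory Num.Theory.
Local Open Scope ring_scope.

Definition edge (n : nat) := {e : {set 'I_n} | #|e| == 2%N}.

Definition delta (n : nat) (S : {set 'I_n}) : {set edge n} :=
  [set e : edge n | #|val e :&: S| == 1%N].

Definition deltav (n : nat) (v : 'I_n) : {set edge n} := delta [set v].

Definition xsum (R : realType) (n : nat) (x : edge n -> R) (F : {set edge n}) : R :=
  \sum_(e in F) x e.

Definition perfect_matching (n : nat) (M : {set edge n}) : Prop :=
  forall v : 'I_n, #|[set e in M | v \in val e]| = 1%N.

Definition chi (R : realType) (n : nat) (M : {set edge n}) : edge n -> R :=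
  fun e => if e \in M then 1 else 0.

(* Index set of the inequality rows B x <= d:
   inl S : odd-set constraint  x(delta S) >= 1  (S odd, |S| >= 3),
   inr e : nonnegativity x_e >= 0. *)
Definition ineq_row (n : nat) := ({set 'I_n} + edge n)%type.

Definition valid_row (n : nat) (i : ineq_row n) : bool :=
  match i with
  | inl A => odd #|A| && (3 <= #|A|)%N
  | inr _ => true
  end.

(* (B y)_i up to the sign of the row (irrelevant for the support). *)
Definition Brow (R : realType) (n : nat) (y : edge n -> R) (i : ineq_row n) : R :=
  match i with
  | inl A => xsum y (delta A)
  | inr e => y e
  end.

Definition Bsupp (R : realType) (n : nat) (y : edge n -> R) : {set ineq_row n} :=
  [set i : ineq_row n | valid_row i && (Brow y i != 0)].

(* A y = 0 : the degree equalities x(delta(v)) = 1 for all v. *)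
Definition in_kerA (R : realType) (n : nat) (y : edge n -> R) : Prop :=
  forall v : 'I_n, xsum y (deltav v) = 0.

Definition nonzero (R : realType) (n : nat) (y : edge n -> R) : Prop :=
  exists e : edge n, y e != 0.

Definition is_circuit (R : realType) (n : nat) (g : edge n -> R) : Prop :=
  [/\ in_kerA g, nonzero g &
      forall y : edge n -> R, in_kerA y -> nonzero y ->
        Bsupp y \subset Bsupp g -> Bsupp y = Bsupp g].

(* Main.v *)
Require Import Defs.
From mathcomp Require Import all_boot all_order all_algebra.
From mathcomp Require Import reals.
Import Order.TTheory GRing.Theory Num.Theory.
Set Implicit Arguments. Unset Strict Implicit. Unset Printing Implicit Defensive.
Local Open Scope ring_scope.

Lemma in_deltav n (v : 'I_n) (e : edge n) : (e \in deltav v) = (v \in val e).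
Proof.
rewrite /deltav /delta inE.
case: (boolP (v \in val e)) => h.
  by rewrite (setIidPr _) ?cards1 // sub1set.
apply/negbTE; rewrite (_ : val e :&: [set v] = set0) ?cards0 //.
apply/setP=> x; rewrite !inE; apply/negbTE; apply/andP=> [[hx /eqP ex]].
by subst x; rewrite hx in h.
Qed.

Lemma card_e n (e : edge n) : #|val e| = 2%N.
Proof. exact: (eqP (valP e)). Qed.

Lemma card_e_le2 n (e : edge n) (S : {set 'I_n}) : (#|val e :&: S| <= 2)%N.
Proof. by apply: leq_trans (subset_leq_card (subsetIl _ _)) _; rewrite card_e. Qed.

Lemma ker_formula (R : realType) n (z : edge n -> R) (S : {set 'I_n}) :
  in_kerA z ->
  xsum z (delta S) = - 2 * \sum_(e : edge n | val e \subset S) z e.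
Proof.
move=> hz.
have H0 : \sum_(v in S) xsum z (deltav v) = 0 by rewrite big1 // => v _; exact: hz.
have H1 : \sum_(v in S) xsum z (deltav v) = \sum_(e : edge n) z e *+ #|val e :&: S|.
  rewrite /xsum.
  under eq_bigr => v _ do rewrite big_mkcond /=.
  rewrite exchange_big /=; apply: eq_bigr => e _.
  rewrite -big_mkcondr /=.
  under eq_bigl => v do rewrite in_deltav.
  rewrite sumr_const; congr (_ *+ _).
  by apply: eq_card => v; rewrite !inE andbC.
rewrite H1 in H0.
have H2 : forall e, z e *+ #|val e :&: S| =
   (if e \in delta S then z e else 0) + 2 * (if val e \subset S then z e else 0).
  move=> e; rewrite /delta inE.
  have := card_e_le2 e S.
  have hsub : (val e \subset S) = (#|val e :&: S| == 2%N).
    apply/idP/idP.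
      by move=> h; rewrite (setIidPl h) card_e.
    move=> /eqP h; apply/setIidPl/eqP; by rewrite eqEcard subsetIl h card_e.
  rewrite hsub.
  case: #|_| => [|[|[|k]]] //= _; rewrite ?mulr0 ?addr0 ?add0r ?mulr2n //.
  by rewrite mulrDl !mul1r.
rewrite (eq_bigr _ (fun e _ => H2 e)) in H0.
move: H0; rewrite big_split /= -big_mkcond -mulr_sumr -big_mkcond /= => H0.
rewrite /xsum; apply/eqP; rewrite -subr_eq0 mulNr opprK H0 //.
Qed.
Lemma pm_fun n (M : {set edge n}) : (0 < n)%N -> perfect_matching M ->
  exists m : 'I_n -> edge n, forall v e, ((e \in M) && (v \in val e)) = (e == m v).
Proof.
move=> hn HM.
have /cards1P [e0 _] := introT eqP (HM (Ordinal hn)).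
exists (fun v => odflt e0 [pick e in [set e in M | v \in val e]]) => v e.
have /cards1P [e1 he1] := introT eqP (HM v).
case: pickP => [x hx|h] /=.
  move: hx; rewrite he1 inE => /eqP ->.
  by rewrite -in_set1 -he1 inE.
by have := h e1; rewrite he1 inE eqxx.
Qed.

Definition matchfun n (M : {set edge n}) (m : 'I_n -> edge n) :=
  forall v e, ((e \in M) && (v \in val e)) = (e == m v).

Lemma m_in n M (m : 'I_n -> edge n) v : matchfun M m -> m v \in M /\ v \in val (m v).
Proof. by move=> hm; have := hm v (m v); rewrite eqxx => /andP. Qed.

Lemma m_uniq n M (m : 'I_n -> edge n) v e : matchfun M m -> e \in M -> v \in val e -> e = m v.
Proof. by move=> hm h1 h2; apply/eqP; rewrite -hm h1 h2. Qed.

Lemma elem_edge n (e : edge n) : exists x y, x != y /\ val e = [set x; y].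
Proof. by apply/cards2P; rewrite card_e. Qed.

Lemma chiE (R : realType) n (M : {set edge n}) e : chi R M e = if e \in M then 1 else 0.
Proof. by []. Qed.

Lemma y_pair (R : realType) n M1 M2 (m1 m2 : 'I_n -> edge n) (y : edge n -> R) v :
  matchfun M1 m1 -> matchfun M2 m2 -> in_kerA y ->
  (forall e, chi R M1 e - chi R M2 e = 0 -> y e = 0) ->
  y (m1 v) + y (m2 v) = 0.
Proof.
move=> h1 h2 hy F1.
have [i1 v1] := m_in v h1; have [i2 v2] := m_in v h2.
have Hz : forall e, e \in deltav v -> e != m1 v -> e != m2 v -> y e = 0.
  move=> e; rewrite in_deltav => he n1 n2; apply: F1.
  rewrite !chiE.
  have -> : (e \in M1) = false by apply/negbTE; apply: contra n1 => hM; rewrite -h1 hM.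
  have -> : (e \in M2) = false by apply/negbTE; apply: contra n2 => hM; rewrite -h2 hM.
  by rewrite subrr.
have := hy v; rewrite /xsum (bigD1 (m1 v)) ?in_deltav //=.
case: (eqVneq (m1 v) (m2 v)) => [eq12|ne12].
  have i2p : m1 v \in M2 by rewrite eq12.
  have y0 : y (m1 v) = 0 by apply: F1; rewrite !chiE i1 i2p subrr.
  by rewrite -eq12 y0 addr0.
rewrite (bigD1 (m2 v)) /=; last by rewrite in_deltav v2 eq_sym ne12.
rewrite big1 ?addr0 // => e /andP [/andP [he n1] n2]; exact: Hz.
Qed.

Lemma cardU_le (T : finType) (A B : {set T}) : (#|A :|: B| <= #|A| + #|B|)%N.
Proof. by rewrite -cardsUI leq_addr. Qed.

Lemma propag (R : realType) n M1 M2 (m1 m2 : 'I_n -> edge n) (y : edge n -> R) e x z :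
  matchfun M1 m1 -> matchfun M2 m2 -> in_kerA y ->
  (forall e, chi R M1 e - chi R M2 e = 0 -> y e = 0) ->
  (e \in M1) || (e \in M2) -> x \in val e -> z \in val e -> y (m1 x) = y (m1 z).
Proof.
move=> h1 h2 hy F1 /orP [he|he] hx hz.
  by rewrite -(m_uniq h1 he hx) -(m_uniq h1 he hz).
have px := y_pair x h1 h2 hy F1; have pz := y_pair z h1 h2 hy F1.
rewrite -(m_uniq h2 he hx) in px; rewrite -(m_uniq h2 he hz) in pz.
by apply: (addIr (y e)); rewrite px pz.
Qed.

Lemma main_eq (R : realType) n M1 M2 (m1 m2 : 'I_n -> edge n) (y : edge n -> R) :
  (9 <= n)%N -> matchfun M1 m1 -> matchfun M2 m2 ->
  in_kerA (fun e => chi R M1 e - chi R M2 e) -> in_kerA y ->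
  (forall e, chi R M1 e - chi R M2 e = 0 -> y e = 0) ->
  (forall S : {set 'I_n}, odd #|S| -> (3 <= #|S|)%N ->
     xsum (fun e => chi R M1 e - chi R M2 e) (delta S) = 0 -> xsum y (delta S) = 0) ->
  forall a b, m1 a != m2 a -> m1 b != m2 b -> y (m1 a) = y (m1 b).
Proof.
move=> hn h1 h2 hc hy F1 F2 a b na nb.
set c := fun e => chi R M1 e - chi R M2 e.
have P : forall e x z, (e \in M1) || (e \in M2) -> x \in val e -> z \in val e ->
  y (m1 x) = y (m1 z) by move=> e x z; exact: (propag h1 h2 hy F1).
apply/eqP; apply: contraT => hne; exfalso.
have [iA aA] := m_in a h2; have [iB bB] := m_in b h1.
set eA := m2 a in iA aA; set eB := m1 b in iB bB.
have A1 : eA \notin M1.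
  by apply: contra na => h; rewrite -/eA (m_uniq h1 h aA).
have B2 : eB \notin M2.
  by apply: contra nb => h; rewrite -/eB (m_uniq h2 h bB).
have nuA : forall x, x \in val eA -> y (m1 x) = y (m1 a).
  by move=> x hx; apply: (P eA); rewrite ?iA ?orbT.
have nuB : forall x, x \in val eB -> y (m1 x) = y (m1 b).
  by move=> x hx; apply: (P eB); rewrite ?iB.
have Hcross : forall e x z, (e \in M1) || (e \in M2) -> x \in val e -> z \in val e ->
    x \in val eA -> z \in val eB -> False.
  move=> e x z he hx hz hxA hzB; move/negP: hne; apply.
  by rewrite -(nuA x hxA) -(nuB z hzB) (P e x z).
have disj : forall x, x \in val eA -> x \in val eB -> False.
  by move=> x hA hB; move/negP: hne; apply; rewrite -(nuA x hA) -(nuB x hB).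
have [u [u' [uu' EA]]] := elem_edge eA.
have [v [v' [vv' EB]]] := elem_edge eB.
set X := val (m1 u) :|: val (m1 u') :|: val (m2 v) :|: val (m2 v').
have cX : (#|X| <= 8)%N.
  rewrite /X; apply: leq_trans (cardU_le _ _) _.
  rewrite (card_e (m2 v')) -[8%N]/(6 + 2)%N leq_add2r.
  apply: leq_trans (cardU_le _ _) _.
  rewrite (card_e (m2 v)) -[6%N]/(4 + 2)%N leq_add2r.
  apply: leq_trans (cardU_le _ _) _.
  by rewrite !card_e.
have [w hw] : exists w, w \notin X.
  have : (0 < #|~: X|)%N.
    have := cardsC X; rewrite card_ord => hC.
    rewrite -(ltn_add2l #|X|) addn0 hC; exact: leq_ltn_trans cX _.
  by case/card_gt0P => w; rewrite inE => hw; exists w.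
have eAX : val eA \subset X.
  have mu := (m_in u h1).2; have mu' := (m_in u' h1).2.
  by apply/subsetP => t; rewrite EA !inE => /orP [] /eqP ->; rewrite ?mu ?mu' ?orbT.
have eBX : val eB \subset X.
  have mv := (m_in v h2).2; have mv' := (m_in v' h2).2.
  by apply/subsetP => t; rewrite EB !inE => /orP [] /eqP ->; rewrite ?mv ?mv' ?orbT.
have mX : forall x, x \in val eA :|: val eB -> val (m1 x) \subset X /\ val (m2 x) \subset X.
  move=> x; rewrite inE => /orP [hx|hx].
    rewrite -(m_uniq h2 iA hx); split => //.
    move: hx; rewrite EA !inE => /orP [] /eqP -> ; apply/subsetP => t ht; by rewrite !inE ht ?orbT.
  rewrite -(m_uniq h1 iB hx); split => //.
  move: hx; rewrite EB !inE => /orP [] /eqP -> ; apply/subsetP => t ht; by rewrite !inE ht ?orbT.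
have HX : forall e x, (e \in M1) || (e \in M2) -> x \in val eA :|: val eB -> x \in val e ->
    w \notin val e.
  move=> e x he hx hxe; have [m1X m2X] := mX x hx.
  case/orP: he => he; [rewrite (m_uniq h1 he hxe) | rewrite (m_uniq h2 he hxe)];
    apply: contra hw; [exact: (subsetP m1X) | exact: (subsetP m2X)].
have wAB : w \notin val eA :|: val eB.
  apply: contra hw => h; rewrite inE in h; case/orP: h; [exact: (subsetP eAX) | exact: (subsetP eBX)].
set S := w |: (val eA :|: val eB).
have cS : #|S| = 5%N.
  rewrite cardsU1 wAB cardsU !card_e.
  rewrite (_ : val eA :&: val eB = set0) ?cards0 //.
  apply/setP => t; rewrite !inE; apply/negbTE/negP => /andP [h h']; exact: disj t h h'.
have Hin : forall e : edge n, val e \subset S -> e != eA -> e != eB -> (e \in M1) || (e \in M2) -> False.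
  move=> e hS nA nB he.
  have [x1 [x2 [nx E]]] := elem_edge e.
  have wne : w \notin val e.
    apply/negP => hwe.
    have [t [hte htw]] : exists t, t \in val e /\ t != w.
      case: (eqVneq x1 w) => [ex|nex]; [exists x2 | exists x1]; rewrite E !inE eqxx ?orbT; split => //.
      by rewrite -ex eq_sym.
    have htS : t \in val eA :|: val eB.
      by have := subsetP hS t hte; rewrite in_setU1 (negbTE htw).
    by have := HX e t he htS hte; rewrite hwe.
  have inAB : forall x, x \in val e -> x \in val eA :|: val eB.
    move=> x hx; have := subsetP hS x hx; rewrite in_setU1; case/orP => // /eqP ex.
    by rewrite -ex hx in wne.
  have hx1 : x1 \in val e by rewrite E !inE eqxx.
  have hx2 : x2 \in val e by rewrite E !inE eqxx orbT.
  have sameA : val e \subset val eA -> False.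
    move=> sub; move/negP: nA; apply; apply/eqP/val_inj/eqP.
    by rewrite eqEcard sub !card_e leqnn.
  have sameB : val e \subset val eB -> False.
    move=> sub; move/negP: nB; apply; apply/eqP/val_inj/eqP.
    by rewrite eqEcard sub !card_e leqnn.
  move: (inAB x1 hx1) (inAB x2 hx2); rewrite !inE => /orP [a1|b1] /orP [a2|b2].
  - by apply: sameA; apply/subsetP => t; rewrite E !inE => /orP [] /eqP ->.
  - exact: (Hcross e x1 x2).
  - exact: (Hcross e x2 x1).
  - by apply: sameB; apply/subsetP => t; rewrite E !inE => /orP [] /eqP ->.
have Hsum : forall z : edge n -> R, (forall e, c e = 0 -> z e = 0) ->
    \sum_(e : edge n | val e \subset S) z e = z eA + z eB.
  move=> z hz.
  have eAS : val eA \subset S by apply/subsetP => t ht; rewrite in_setU1 inE ht orbT.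
  have eBS : val eB \subset S by apply/subsetP => t ht; rewrite in_setU1 inE ht !orbT.
  have nAB : eB != eA.
    by apply/negP => /eqP E'; apply: (disj b) => //; rewrite -E'.
  rewrite (bigD1 eA) //= (bigD1 eB) /=; last by rewrite eBS nAB.
  rewrite big1 ?addr0 // => e /andP [/andP [heS neA] neB]; apply: hz.
  rewrite /c !chiE; case: (boolP (e \in M1)) => e1.
    by exfalso; apply: (Hin e) => //; rewrite e1.
  case: (boolP (e \in M2)) => e2.
    by exfalso; apply: (Hin e) => //; rewrite e2 orbT.
  by rewrite subrr.
have hcS : xsum c (delta S) = 0.
  rewrite ker_formula // Hsum // /c !chiE iA (negbTE A1) iB (negbTE B2).
  by rewrite sub0r subr0 addNr mulr0.
have := F2 S; rewrite cS => /(_ isT isT hcS).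
rewrite ker_formula // Hsum; last exact: F1.
move/eqP; rewrite mulf_eq0 oppr_eq0 pnatr_eq0 orFb => /eqP hs.
have pa := y_pair a h1 h2 hy F1.
move/negP: hne; apply; apply/eqP.
by apply: (addIr (y eA)); rewrite pa addrC hs.
Qed.

Lemma sum_chi_deltav (R : realType) n (M : {set edge n}) (m : 'I_n -> edge n) v :
  matchfun M m -> xsum (chi R M) (deltav v) = 1.
Proof.
move=> hm; have [im vm] := m_in v hm.
rewrite /xsum (bigD1 (m v)) ?in_deltav //= chiE im big1 ?addr0 // => e /andP [he ne].
rewrite chiE; case: ifP => // eM; exfalso; move/negP: ne; apply.
by rewrite -hm eM -in_deltav.
Qed.

Theorem lemma5 (R : realType) (n : nat) (M1 M2 : {set edge n}) :
  ~~ odd n -> (10 <= n)%N ->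
  perfect_matching M1 -> perfect_matching M2 -> M1 != M2 ->
  is_circuit (fun e : edge n => chi R M1 e - chi R M2 e).
Proof.
move=> _ hn P1 P2 neM.
have hn0 : (0 < n)%N by apply: leq_trans hn.
have [m1 h1] := pm_fun hn0 P1; have [m2 h2] := pm_fun hn0 P2.
set c := fun e => chi R M1 e - chi R M2 e.
have hc : in_kerA c.
  move=> v; rewrite /xsum /c sumrB.
  by rewrite -!/(xsum _ _) (sum_chi_deltav R v h1) (sum_chi_deltav R v h2) subrr.
have [a0 na0] : exists a, m1 a != m2 a.
  move: neM; rewrite eqEsubset negb_and => /orP [] /subsetPn [e he hne].
    have [x [x' [_ E]]] := elem_edge e.
    have hx : x \in val e by rewrite E !inE eqxx.
    exists x; rewrite -(m_uniq h1 he hx); apply/eqP => E2.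
    by move/negP: hne; apply; rewrite E2; exact: (m_in x h2).1.
  have [x [x' [_ E]]] := elem_edge e.
  have hx : x \in val e by rewrite E !inE eqxx.
  exists x; rewrite -(m_uniq h2 he hx); apply/eqP => E2.
  by move/negP: hne; apply; rewrite -E2; exact: (m_in x h1).1.
have cnz : forall e, c e != 0 -> exists x, x \in val e.
  move=> e _; have [x [x' [_ E]]] := elem_edge e; exists x; by rewrite E !inE eqxx.
split => //.
  exists (m1 a0); rewrite /c !chiE (m_in a0 h1).1.
  case: ifP => h; last by rewrite subr0 oner_eq0.
  by rewrite (m_uniq h2 h (m_in a0 h1).2) eqxx in na0.
move=> y hy [e0 ye0] sub.
have F1 : forall e, c e = 0 -> y e = 0.
  move=> e ce; apply/eqP; apply: contraT => ne.
  have : inr e \in Bsupp y by rewrite inE /= ne.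
  by move/(subsetP sub); rewrite inE /= ce eqxx.
have F2 : forall S : {set 'I_n}, odd #|S| -> (3 <= #|S|)%N ->
    xsum c (delta S) = 0 -> xsum y (delta S) = 0.
  move=> S oS cS ce; apply/eqP; apply: contraT => ne.
  have : inl S \in Bsupp y by rewrite inE /= oS cS ne.
  by move/(subsetP sub); rewrite inE /= ce eqxx andbF.
have ME := main_eq (leq_trans (isT : (9 <= 10)%N) hn) h1 h2 hc hy F1 F2.
set mu := y (m1 a0).
have yE : forall e, y e = mu * c e.
  move=> e; rewrite /c !chiE.
  case: (boolP (e \in M1)) => e1; case: (boolP (e \in M2)) => e2.
  - by rewrite subrr mulr0; apply: F1; rewrite /c !chiE e1 e2 subrr.
  - have [x [x' [_ E]]] := elem_edge e.
    have hx : x \in val e by rewrite E !inE eqxx.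
    have D : m1 x != m2 x.
      rewrite -(m_uniq h1 e1 hx); apply/eqP => E2.
      by move/negP: e2; apply; rewrite E2; exact: (m_in x h2).1.
    by rewrite subr0 mulr1 /mu (m_uniq h1 e1 hx) (ME x a0 D na0).
  - have [x [x' [_ E]]] := elem_edge e.
    have hx : x \in val e by rewrite E !inE eqxx.
    have D : m1 x != m2 x.
      rewrite -(m_uniq h2 e2 hx); apply/eqP => E2.
      by move/negP: e1; apply; rewrite -E2; exact: (m_in x h1).1.
    have px := y_pair x h1 h2 hy F1.
    rewrite sub0r mulrN1 /mu -(ME x a0 D na0) (m_uniq h2 e2 hx).
    by apply: (addIr (y (m1 x))); rewrite addNr addrC px.
  - by rewrite subrr mulr0; apply: F1; rewrite /c !chiE (negbTE e1) (negbTE e2) subrr.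
have mu0 : mu != 0.
  by apply: contra ye0; rewrite yE => /eqP ->; rewrite mul0r.
apply/setP => i; rewrite !inE.
have -> : Brow y i = mu * Brow c i.
  case: i => [A|e] /=; last exact: yE.
  by rewrite /xsum mulr_sumr; apply: eq_bigr => e _; rewrite yE.
by rewrite mulf_eq0 negb_or mu0.
Qed.
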